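(* Consider the filtered ring $\mathbf{Z}[x]/(x^4)$ with $x$ in filtration exactly $d$ for some $d\ge1$, and let $R$ be a filtered $\lambda$-ring structure on it. (1) If $\psi^p_R(x)\equiv px\pmod{x^2}$ for all primes $p$, then $R$ is isomorphic to the filtered $\lambda$-ring structure with $\psi^p(x)=(1+x)^p-1$ for all primes $p$. (2) If $\psi^p_R(x)\equiv p^2x\pmod{x^2}$ for all primes $p$, then $R$ is isomorphic to one of the following $60$ mutually non-isomorphic filtered $\lambda$-ring structures on $\mathbf{Z}[x]/(x^4)$: \[S(k,d_2)=\Bigl\{\psi^p(x)=p^2x+\frac{kp^2(p^2-1)}{12}x^2+d_px^3\Bigr\},\] where $k\in\{1,5\}$, $d_2\in\{0,2,4,\ldots,58\}$, and for odd primes $p$, \[d_p=\frac{p^2(p^4-1)d_2}{60}+\frac{k^2p^2(p^2-1)(p^2-4)}{360}.\] (3) If $\psi^p_R(x)\equiv b_px\pmod{x^2}$ with $b_p\ne0$ for all primes $p$, then there are only finitely many isomorphism classes of filtered $\lambda$-ring structures $S$ on $\mathbf{Z}[x]/(x^4)$ such that $\psi^p_S(x)\equiv b_px\pmod{x^2}$ for all primes $p$. (4) If $\psi^2_R(x)\equiv 0\pmod{x^2}$, then $R$ is of the form $S((c_p),(d_p))=\{\psi^p(x)=c_px^2+d_px^3\colon p\text{ prime}\}$. Any such collection of polynomials (with integers $c_p,d_p$) gives rise to a filtered $\lambda$-ring structure provided $\psi^p(x)\equiv x^p\pmod p$ for all primes $p$. Two such, $S((c_p),(d_p))$ and $S((\bar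 c_p),(\bar d_p))$, are isomorphic if and only if (i) $(c_p)=\pm(\bar c_p)$ and (ii) there exists an integer $\alpha$ with $\bar d_p=d_p+2c_p\alpha$ for all primes $p$.
   Context: A (special) $\lambda$-ring is a commutative ring with operations $\lambda^i$ satisfying the Atiyah–Tall axioms; a filtered $\lambda$-ring is a $\lambda$-ring with decreasing filtration by ideals $I^k$ closed under $\lambda^i$, $i\ge1$; isomorphisms are filtration-preserving $\lambda$-ring isomorphisms. The filtered ring $\mathbf{Z}[x]/(x^n)$ with $x$ in filtration $d$ has $I^k$ generated by the $x^j$ with $jd\ge k$. A filtered $\lambda$-ring structure $R$ on it is determined by its Adams operations on $x$, written $\psi^p_R(x)\in\mathbf{Z}[x]/(x^n)$ for primes $p$ (polynomials without constant term); a family of such polynomials defines a filtered $\lambda$-ring structure iff $\psi^p(\psi^q(x))=\psi^q(\psi^p(x))$ and $\psi^p(x)\equiv x^p\pmod p$ for all primes $p,q$. The notation $\{\psi^p(x)=\ldots\}$ denotes the filtered $\lambda$-ring structure with these Adams operations. *)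

(* Defs.v *)
(* Elements of Z[x]/(x^4) are represented by their normal
   forms: polynomials in {poly int} of size <= 4. *)
From mathcomp Require Import all_boot all_algebra.
Set Implicit Arguments. Unset Strict Implicit. Unset Printing Implicit Defensive.
Import GRing.Theory Num.Theory.
Local Open Scope ring_scope.

Definition trunc4 (q : {poly int}) : {poly int} := take_poly 4 q.

(* [ev q f] : the element q(f) of Z[x]/(x^4), i.e. the image of q under the
   ring endomorphism x |-> f. *)
Definition ev (q f : {poly int}) : {poly int} := trunc4 (q \Po f).

Definition is_elt (q : {poly int}) : Prop := (size q <= 4)%N.

(* A family psi p (p prime) of polynomials without constant term, giving
   psi^p(x); it defines a filtered lambda-ring structure iff
   psi^p(psi^q(x)) = psi^q(psi^p(x)) and psi^p(x) = x^p mod p. *)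
Definition is_flstruct (psi : nat -> {poly int}) : Prop :=
  (forall p, prime p -> is_elt (psi p) /\ (psi p)`_0 = 0) /\
  (forall p q, prime p -> prime q -> ev (psi q) (psi p) = ev (psi p) (psi q)) /\
  (forall p, prime p -> forall i, (p%:Z %| (trunc4 (psi p - 'X^p))`_i)%Z).

(* filtration with x in filtration d: I^k is generated by the x^j with
   j*d >= k, i.e. g is in I^k iff its coefficients of x^j with j*d < k vanish *)
Definition in_filt (d k : nat) (g : {poly int}) : Prop :=
  forall j, (j * d < k)%N -> g`_j = 0.

(* isomorphism of filtered lambda-ring structures R -> S: a ring
   automorphism x |-> f (inverse x |-> g), preserving the filtration in both
   directions, and commuting with the Adams operations psi^p, p prime. *)
Definition fliso (d : nat) (R S : nat -> {poly int}) : Prop :=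
  exists f g : {poly int},
    (is_elt f /\ is_elt g /\ f`_0 = 0 /\ g`_0 = 0) /\
    (ev f g = 'X /\ ev g f = 'X) /\
    (forall k h, is_elt h -> in_filt d k h ->
        in_filt d k (ev h f) /\ in_filt d k (ev h g)) /\
    (forall p, prime p -> ev (R p) f = ev f (S p)).

Definition S1 (p : nat) : {poly int} := trunc4 (('X + 1) ^+ p - 1).

Definition dcoef (k d2 : int) (p : nat) : int :=
  if p == 2%N then d2 else
  ((p%:Z ^+ 2 * (p%:Z ^+ 4 - 1) * d2) %/ 60)%Z +
  ((k ^+ 2 * p%:Z ^+ 2 * (p%:Z ^+ 2 - 1) * (p%:Z ^+ 2 - 4)) %/ 360)%Z.

Definition Skd (k : int) (d2 : nat) (p : nat) : {poly int} :=
  (p%:Z ^+ 2) *: 'X + ((k * p%:Z ^+ 2 * (p%:Z ^+ 2 - 1)) %/ 12)%Z *: 'X^2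
  + dcoef k d2%:Z p *: 'X^3.

Definition Scd (c e : nat -> int) (p : nat) : {poly int} :=
  c p *: 'X^2 + e p *: 'X^3.

(* Main.v *)
Require Import Defs.
From mathcomp Require Import all_boot all_algebra.
From mathcomp Require Import ring lra zify.
Import GRing.Theory Num.Theory.
Local Open Scope ring_scope.
Set Implicit Arguments. Unset Strict Implicit. Unset Printing Implicit Defensive.

Lemma unit_pm (f g : int) : g * f = 1 -> f = 1 \/ f = -1.
Proof. by move/intUnitRing.unitzPl; rewrite qualifE => /orP[/eqP|/eqP]; auto. Qed.

Definition mk (h0 h1 h2 h3 : int) : {poly int} :=
  h0%:P + h1 *: 'X + h2 *: 'X^2 + h3 *: 'X^3.

Lemma size_mk h0 h1 h2 h3 : (size (mk h0 h1 h2 h3) <= 4)%N.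
Proof.
rewrite /mk; repeat (apply: leq_trans (size_polyD _ _) _; rewrite geq_max; apply/andP; split).
- exact: leq_trans (size_polyC_leq1 _) _.
- by apply: leq_trans (size_scale_leq _ _) _; rewrite size_polyX.
- by apply: leq_trans (size_scale_leq _ _) _; rewrite size_polyXn.
- by apply: leq_trans (size_scale_leq _ _) _; rewrite size_polyXn.
Qed.

Lemma coef_mk h0 h1 h2 h3 i :
  (mk h0 h1 h2 h3)`_i = if i == 0%N then h0 else if i == 1%N then h1 else
     if i == 2%N then h2 else if i == 3%N then h3 else 0.
Proof.
rewrite /mk !coefD !coefZ coefC coefX !coefXn.
by case: i => [|[|[|[|i]]]] /=; rewrite ?mulr0 ?mulr1 ?addr0 ?add0r.
Qed.

Lemma mk_eq h0 h1 h2 h3 k0 k1 k2 k3 :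
  h0 = k0 -> h1 = k1 -> h2 = k2 -> h3 = k3 -> mk h0 h1 h2 h3 = mk k0 k1 k2 k3.
Proof. by move=> -> -> -> ->. Qed.

Lemma mk_inj h0 h1 h2 h3 k0 k1 k2 k3 :
  mk h0 h1 h2 h3 = mk k0 k1 k2 k3 -> [/\ h0 = k0, h1 = k1, h2 = k2 & h3 = k3].
Proof.
move=> E; have C i : (mk h0 h1 h2 h3)`_i = (mk k0 k1 k2 k3)`_i by rewrite E.
move: (C 0%N) (C 1%N) (C 2%N) (C 3%N).
by rewrite !coef_mk /=.
Qed.

Lemma elt_mk q : is_elt q -> q = mk q`_0 q`_1 q`_2 q`_3.
Proof.
move=> Hq; apply/polyP => i; rewrite coef_mk.
case: i => [|[|[|[|i]]]] //=.
by rewrite nth_default //; apply: leq_trans Hq _.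
Qed.

Lemma ev_mk h0 h1 h2 h3 f1 f2 f3 :
  ev (mk h0 h1 h2 h3) (mk 0 f1 f2 f3) =
  mk h0 (h1 * f1) (h1 * f2 + h2 * f1 ^+ 2)
     (h1 * f3 + 2 * h2 * f1 * f2 + h3 * f1 ^+ 3).
Proof.
rewrite /ev /trunc4.
set G := f1%:P + f2%:P * 'X + f3%:P * 'X^2.
set H := f2%:P + f3%:P * 'X.
have E : mk h0 h1 h2 h3 \Po mk 0 f1 f2 f3 = mk h0 (h1 * f1) (h1 * f2 + h2 * f1 ^+ 2)
     (h1 * f3 + 2 * h2 * f1 * f2 + h3 * f1 ^+ 3) +
   (h2%:P * ((f2 ^+ 2 + 2 * f1 * f3)%:P + (2 * f2 * f3)%:P * 'X + (f3 ^+ 2)%:P * 'X^2)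
    + h3%:P * (H * (G ^+ 2 + G * f1%:P + (f1 ^+ 2)%:P))) * 'X^4.
  rewrite /mk !comp_polyD !comp_polyZ comp_polyC comp_polyX !comp_Xn_poly.
  rewrite /G /H -!mul_polyC ?polyCD ?polyCM ?polyC_exp ?polyC0 ?polyCN.
  have -> : (2 : int)%:P = 2 by rewrite polyC_natr.
  ring.
rewrite E take_polyDMXn //; exact: size_mk.
Qed.

Definition trip := (int * int * int)%type.
Definition tp (u : trip) : {poly int} := mk 0 u.1.1 u.1.2 u.2.
Definition comp (u v : trip) : trip :=
  (u.1.1 * v.1.1, u.1.1 * v.1.2 + u.1.2 * v.1.1 ^+ 2,
   u.1.1 * v.2 + 2 * u.1.2 * v.1.1 * v.1.2 + u.2 * v.1.1 ^+ 3).
Definition tid : trip := (1, 0, 0).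

Lemma ev_tp u v : ev (tp u) (tp v) = tp (comp u v).
Proof. by rewrite /tp ev_mk; apply: mk_eq => //=; ring. Qed.

Lemma tp_inj u v : tp u = tp v -> u = v.
Proof. by case: u => [[a b] c]; case: v => [[a' b'] c'] /mk_inj [_ /= -> -> ->]. Qed.

Lemma tp_id : tp tid = 'X.
Proof. by rewrite /tp /mk /= scale1r !scale0r !addr0 add0r. Qed.

Lemma compA u v w : comp (comp u v) w = comp u (comp v w).
Proof.
case: u => [[a b] c]; case: v => [[a' b'] c']; case: w => [[a'' b'' c'']].
rewrite /comp /=; congr (_, _, _); ring.
Qed.

Lemma comp1t u : comp tid u = u.
Proof. case: u => [[a b] c]; rewrite /comp /=; congr (_, _, _); ring. Qed.
Lemma compt1 u : comp u tid = u.
Proof. case: u => [[a b] c]; rewrite /comp /=; congr (_, _, _); ring. Qed.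

Lemma elt_tp q : is_elt q -> q`_0 = 0 -> q = tp (q`_1, q`_2, q`_3).
Proof. by move=> Hq H0; rewrite {1}(elt_mk Hq) H0. Qed.

Lemma eq_via (u v x y : int) : u = v -> x - y = u - v -> x = y.
Proof. by move=> -> /eqP; rewrite subrr subr_eq0 => /eqP. Qed.

Lemma comm_eqs (V W : trip) : comp V W = comp W V ->
  V.1.2 * (W.1.1 - W.1.1 ^+ 2) = W.1.2 * (V.1.1 - V.1.1 ^+ 2) /\
  V.2 * (W.1.1 - W.1.1 ^+ 3) = W.2 * (V.1.1 - V.1.1 ^+ 3) + 2 * W.1.2 * V.1.2 * (W.1.1 - V.1.1).
Proof.
case: V => [[A C] D]; case: W => [[a c e]]; rewrite /comp /= => -[_ E2 E3].
by split; [apply: (eq_via (esym E2)) | apply: (eq_via (esym E3))]; ring.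
Qed.

Lemma uniq_comm (V V' W : trip) : comp V W = comp W V -> comp V' W = comp W V' ->
  V.1.1 = V'.1.1 -> W.1.1 - W.1.1 ^+ 2 != 0 -> W.1.1 - W.1.1 ^+ 3 != 0 -> V = V'.
Proof.
move=> /comm_eqs [E1 E2] /comm_eqs [E1' E2'] Ea n2 n3.
have HC : V.1.2 = V'.1.2 by apply: (mulIf n2); rewrite E1 E1' Ea.
have HD : V.2 = V'.2 by apply: (mulIf n3); rewrite E2 E2' Ea HC.
by case: V V' Ea HC HD {E1 E2 E1' E2'} => [[A C] D] [[A' C'] D'] /= -> -> ->.
Qed.

Lemma conj_step (rp r2 s2 sp f g : trip) :
  comp rp r2 = comp r2 rp -> comp sp s2 = comp s2 sp -> rp.1.1 = sp.1.1 ->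
  comp f g = tid -> comp g f = tid -> comp r2 f = comp f s2 ->
  s2.1.1 - s2.1.1 ^+ 2 != 0 -> s2.1.1 - s2.1.1 ^+ 3 != 0 -> comp rp f = comp f sp.
Proof.
move=> Cr Cs Eb Hfg Hgf Hc n2 n3.
have Hg : comp g r2 = comp s2 g.
  transitivity (comp (comp g r2) (comp f g)); first by rewrite Hfg compt1.
  by rewrite -compA (compA g r2 f) Hc -compA Hgf comp1t.
pose T := comp g (comp rp f).
have CT : comp T s2 = comp s2 T.
  rewrite /T !compA -Hc -(compA rp r2 f) Cr (compA r2 rp f) -(compA g r2) Hg.
  by rewrite !compA.
have ET : T.1.1 = sp.1.1.
  move: Hgf; rewrite /T /comp /tid /= -Eb => -[H1 _ _].
  by rewrite mulrCA H1 mulr1.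
have -> : sp = T by apply: (uniq_comm Cs CT) => //.
by rewrite /T -compA Hfg comp1t.
Qed.

Lemma fliso_of d (R S : nat -> {poly int}) (r s : nat -> trip) (f g : trip) :
  (forall p, prime p -> R p = tp (r p)) -> (forall p, prime p -> S p = tp (s p)) ->
  comp f g = tid -> comp g f = tid ->
  (forall p, prime p -> comp (r p) f = comp f (s p)) -> fliso d R S.
Proof.
move=> HR HS Hfg Hgf Hc; exists (tp f), (tp g).
split; first by rewrite /is_elt !size_mk !coef_mk.
split; first by rewrite !ev_tp Hfg Hgf tp_id.
split; last by move=> p pp; rewrite HR // HS // !ev_tp Hc.
have key (u : trip) k h : is_elt h -> in_filt d k h -> in_filt d k (ev h (tp u)).
  move=> Hh Hf; rewrite (elt_mk Hh) /tp ev_mk => j Hj; rewrite coef_mk.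
  have Z i : (i <= j)%N -> h`_i = 0.
    by move=> Hi; apply: Hf; apply: leq_ltn_trans Hj; rewrite leq_mul2r Hi orbT.
  by case: j Hj Z => [|[|[|[|j]]]] //= _ Z; rewrite !Z //; ring.
by move=> k h Hh Hf; split; apply: key.
Qed.

Definition tr (R : nat -> {poly int}) p : trip := ((R p)`_1, (R p)`_2, (R p)`_3).

Lemma fl_tp R p : is_flstruct R -> prime p -> R p = tp (tr R p).
Proof. by move=> [H _] pp; case: (H p pp) => H1 H2; apply: elt_tp. Qed.

Lemma fl_comm R p q : is_flstruct R -> prime p -> prime q ->
  comp (tr R q) (tr R p) = comp (tr R p) (tr R q).
Proof.
move=> HR pp pq; have [_ [H _]] := HR; have := H p q pp pq.
by rewrite (fl_tp HR pp) (fl_tp HR pq) !ev_tp => /tp_inj.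
Qed.

Lemma coef_cong (P : {poly int}) p i :
  (trunc4 (P - 'X^p))`_i = if (i < 4)%N then P`_i - (i == p)%:R else 0.
Proof. by rewrite /trunc4 coef_take_poly coefB coefXn. Qed.

Lemma fl_cong R p i : is_flstruct R -> prime p -> (i < 4)%N ->
  (p%:Z %| (R p)`_i - (i == p)%:R)%Z.
Proof. by move=> [_ [_ H]] pp Hi; have := H p pp i; rewrite coef_cong Hi. Qed.

Lemma Scd_tp c e p : Scd c e p = tp (0, c p, e p).
Proof. by rewrite /Scd /tp /mk /= scale0r !addr0 add0r. Qed.

Lemma dvdz1P (p : nat) : prime p -> ~ (p%:Z %| 1)%Z.
Proof. by move=> pp; rewrite dvdz1 absz_nat => /eqP E; rewrite E in pp. Qed.

Lemma part4a R : is_flstruct R -> (R 2%N)`_1 = 0 ->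
  exists c e : nat -> int, forall p, prime p -> R p = Scd c e p.
Proof.
move=> HR H2; exists (fun p => (R p)`_2), (fun p => (R p)`_3) => p pp.
rewrite Scd_tp; transitivity (tp (tr R p)); first exact: fl_tp HR pp.
rewrite /tr; congr (tp (_, _, _)).
have := fl_comm HR pp (isT : prime 2); rewrite /comp /tr /= H2 => -[_ E _].
have c2odd := fl_cong HR (isT : prime 2) (isT : (2 < 4)%N).
have bp := fl_cong HR pp (isT : (1 < 4)%N).
have p1 : (1 == p) = false by apply/negbTE; move: pp; case: eqP => // <-.
rewrite p1 subr0 in bp.
have c2n0 : (R 2%N)`_2 != 0.
  by apply/eqP => E0; move: c2odd; rewrite E0 /= => /dvdzP [q Hq]; lia.
have : (R 2%N)`_2 * ((R p)`_1 * ((R p)`_1 - 1)) = 0.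
  by apply: (eq_via E); ring.
move/eqP; rewrite mulf_eq0 (negbTE c2n0) /= mulf_eq0 subr_eq0 => /orP[/eqP //|/eqP E1].
by move: bp; rewrite E1 => /(dvdz1P pp).
Qed.

Lemma fliso_tp d (R S : nat -> {poly int}) (r s : nat -> trip) :
  (forall p, prime p -> R p = tp (r p)) -> (forall p, prime p -> S p = tp (s p)) ->
  fliso d R S -> exists f g : trip, [/\ comp f g = tid, comp g f = tid &
     forall p, prime p -> comp (r p) f = comp f (s p)].
Proof.
move=> HR HS [F [G [[eF [eG [F0 G0]]] [[FG GF] [_ HC]]]]].
rewrite (elt_tp eF F0) (elt_tp eG G0) !ev_tp -tp_id in FG GF HC.
exists (F`_1, F`_2, F`_3), (G`_1, G`_2, G`_3); split.
- exact: tp_inj FG.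
- exact: tp_inj GF.
by move=> p pp; have := HC p pp; rewrite HR // HS // !ev_tp => /tp_inj.
Qed.

Lemma inv_unit (f g : trip) : comp g f = tid -> f.1.1 = 1 \/ f.1.1 = -1.
Proof. by rewrite /comp /tid => -[H _ _]; apply: unit_pm H. Qed.

Lemma part4b (c e : nat -> int) :
  (forall p, prime p -> forall i, (p%:Z %| (trunc4 (Scd c e p - 'X^p))`_i)%Z) ->
  is_flstruct (Scd c e).
Proof.
move=> H; split; last split => //.
  by move=> p _; rewrite Scd_tp /is_elt size_mk coef_mk.
move=> p q _ _; rewrite !Scd_tp !ev_tp; congr tp; rewrite /comp /=; congr (_, _, _); ring.
Qed.

Lemma part4c d (c e cb eb : nat -> int) :
  fliso d (Scd c e) (Scd cb eb) <->
  ((forall p, prime p -> cb p = c p) \/ (forall p, prime p -> cb p = - c p)) /\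
  (exists alpha : int, forall p, prime p -> eb p = e p + 2 * c p * alpha).
Proof.
split.
  move=> H.
  have [[[f1 f2] f3] [g [Hfg Hgf Hc]]] := fliso_tp (r := fun p => (0, c p, e p))
     (s := fun p => (0, cb p, eb p)) (fun p _ => Scd_tp c e p) (fun p _ => Scd_tp cb eb p) H.
  have /= [E1|E1] := inv_unit Hgf; rewrite E1 in Hc.
  - split; first (left => p pp; have := congr1 (fun t : trip => t.1.2) (Hc p pp); rewrite /comp /= => E2; lia).
    by exists f2 => p pp; have := congr1 (fun t : trip => t.2) (Hc p pp); rewrite /comp /= => E2; lia.
  - split; first (right => p pp; have := congr1 (fun t : trip => t.1.2) (Hc p pp); rewrite /comp /= => E2; lia).
    by exists f2 => p pp; have := congr1 (fun t : trip => t.2) (Hc p pp); rewrite /comp /= => E2; lia.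
move=> [Hs [al Ha]].
have [eps [Heps Hcb]] : exists eps : int, (eps = 1 \/ eps = -1) /\
    forall p, prime p -> cb p = eps * c p.
  case: Hs => H; [exists 1 | exists (-1)]; split; auto => p pp; rewrite H //; ring.
apply: (fliso_of d (r := fun p => (0, c p, e p)) (s := fun p => (0, cb p, eb p))
   (f := (eps, al, 0)) (g := (eps, - eps * al, 2 * eps * al ^+ 2))).
- by move=> p _; exact: Scd_tp.
- by move=> p _; exact: Scd_tp.
- by rewrite /comp /tid /=; case: Heps => ->; congr (_, _, _); ring.
- by rewrite /comp /tid /=; case: Heps => ->; congr (_, _, _); ring.
move=> p pp; rewrite /comp /= Hcb // Ha //.
by case: Heps => ->; congr (_, _, _); ring.
Qed.

Lemma conj_comm (rp r2 f g : trip) :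
  comp rp r2 = comp r2 rp -> comp f g = tid ->
  comp (comp g (comp rp f)) (comp g (comp r2 f)) =
  comp (comp g (comp r2 f)) (comp g (comp rp f)).
Proof.
move=> Cr Hfg.
have E (u v : trip) : comp (comp g (comp u f)) (comp g (comp v f)) = comp g (comp (comp u v) f).
  by rewrite !compA -(compA f g) Hfg comp1t.
by rewrite !E Cr.
Qed.

Definition Pc (b : nat -> int) (c' e' : int) (p : nat) : trip :=
  let a := b 2%N in let A := b p in
  let C := ((c' * (A - A ^+ 2)) %/ (a - a ^+ 2))%Z in
  (A, C, ((e' * (A - A ^+ 3) + 2 * c' * C * (a - A)) %/ (a - a ^+ 3))%Z).

Definition Lst (b : nat -> int) : seq (nat -> {poly int}) :=
  let M := `|b 2%N - b 2%N ^+ 2|%N in let N := `|b 2%N - b 2%N ^+ 3|%N in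
  [seq (fun p => tp (Pc b (i %/ N)%N%:Z (i %% N)%N%:Z p)) | i <- iota 0 (M * N)].

Lemma part3 d (b : nat -> int) : (forall p, prime p -> b p != 0) ->
  exists L : seq (nat -> {poly int}),
    forall S, is_flstruct S -> (forall p, prime p -> (S p)`_1 = b p) ->
      exists i, (i < size L)%N /\ fliso d S (nth S1 L i).
Proof.
move=> bn0; exists (Lst b) => S HS Hb.
have p2 : prime 2 by [].
set a := b 2%N.
have a0 : a != 0 by apply: bn0.
have [qa Hqa] : exists q, a = q * 2.
  by apply/dvdzP; have := fl_cong HS p2 (isT : (1 < 4)%N); rewrite Hb //= subr0.
have m0 : a - a ^+ 2 != 0.
  have -> : a - a ^+ 2 = a * (1 - a) by ring.
  by rewrite mulf_eq0 negb_or a0 /=; apply/eqP; lia.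
have n0 : a - a ^+ 3 != 0.
  have -> : a - a ^+ 3 = a * ((1 - a) * (1 + a)) by ring.
  by rewrite mulf_eq0 negb_or a0 /= mulf_eq0 negb_or; apply/andP; split; apply/eqP; lia.
set m := a - a ^+ 2; set n := a - a ^+ 3.
set c := (S 2%N)`_2; set e := (S 2%N)`_3.
have Es2 : tr S 2 = (a, c, e) by rewrite /tr Hb.
have [q [r [Ec Hr]]] : exists q r, c = q * m + r /\ 0 <= r < `|m|.
  exists (c %/ m)%Z, (c %% m)%Z; lia.
set X := e + 2 * c * (- q) - 2 * (- q) * a * r.
have [q2 [r2 [EX Hr2]]] : exists q r, X = q * n + r /\ 0 <= r < `|n|.
  exists (X %/ n)%Z, (X %% n)%Z; lia.
pose f : trip := (1, - q, - q2).
pose g : trip := (1, q, 2 * q ^+ 2 + q2).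
have Hfg : comp f g = tid by rewrite /comp /tid /=; congr (_, _, _); ring.
have Hgf : comp g f = tid by rewrite /comp /tid /=; congr (_, _, _); ring.
have HT2 : comp f (a, r, r2) = comp (tr S 2) f.
  rewrite Es2 /comp /=; congr (_, _, _).
  - ring.
  - rewrite Ec /m; ring.
  - by apply: (eq_via (esym EX)); rewrite /X /n; ring.
have T2E : comp g (comp (tr S 2) f) = (a, r, r2) by rewrite -HT2 -compA Hgf comp1t.
pose M := `|m|%N; pose N := `|n|%N.
have N0 : (0 < N)%N by rewrite /N absz_gt0.
pose i := (`|r| * N + `|r2|)%N.
have iM : (i < M * N)%N.
  have : (`|r| < M)%N by rewrite /M; lia.
  have : (`|r2| < N)%N by rewrite /N; lia.
  move=> h1 h2; rewrite /i; apply: (@leq_trans (`|r| * N + N)%N); first by rewrite ltn_add2l.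
  by rewrite -mulSnr leq_mul2r h2 orbT.
exists i; split; first by rewrite size_map size_iota.
rewrite /Lst (nth_map 0%N) ?size_iota // nth_iota // add0n.
have r2N : (`|r2| < N)%N by rewrite /N; clearbody a m n; lia.
have -> : (i %/ N)%N = `|r|%N by rewrite /i divnMDl // divn_small ?addn0.
have -> : (i %% N)%N = `|r2|%N by rewrite /i modnMDl modn_small.
have -> : (`|r|%N)%:Z = r by clearbody a m n; lia.
have -> : (`|r2|%N)%:Z = r2 by clearbody a m n; lia.
apply: (fliso_of d (r := tr S) (s := Pc b r r2) (f := f) (g := g)) => //.
  by move=> p pp; apply: fl_tp.
move=> p pp.
set Tp := comp g (comp (tr S p) f).
have CT := conj_comm (fl_comm HS p2 pp) Hfg; rewrite T2E -/Tp in CT.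
have ET : Tp.1.1 = b p by rewrite /Tp /comp /= /tr Hb //; ring.
have HTp : comp f Tp = comp (tr S p) f by rewrite /Tp -compA Hfg comp1t.
clearbody Tp.
have [E1 E2] := comm_eqs CT.
simpl in E1, E2; rewrite ET in E1 E2.
have HC : Tp.1.2 = ((r * (b p - b p ^+ 2)) %/ m)%Z by rewrite -E1 mulzK.
have HD : Tp.2 = ((r2 * (b p - b p ^+ 3) + 2 * r * Tp.1.2 * (a - b p)) %/ n)%Z
  by rewrite -E2 mulzK.
have -> : Pc b r r2 p = Tp.
  rewrite /Pc -/a -/m -/n -HC -HD -ET.
  by case: (Tp) => [[]].
by rewrite HTp.
Qed.

Lemma ffz (n k : nat) : ((k`!)%:Z %| (n ^_ k)%:Z)%Z.
Proof. by rewrite dvdzE !absz_nat -bin_ffact dvdn_mull. Qed.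

Lemma F6 (m : nat) : (6 %| (m%:Z + 3) * (m%:Z + 2) * (m%:Z + 1))%Z.
Proof.
have := ffz m.+3 3; rewrite !ffactnS ffactn0 /=.
have -> : (m%:Z + 3) * (m%:Z + 2) * (m%:Z + 1) = Posz (m.+3 * (m.+2 * (m.+1 * 1))) by lia.
by [].
Qed.
Lemma F24 (m : nat) : (24 %| (m%:Z + 4) * (m%:Z + 3) * (m%:Z + 2) * (m%:Z + 1))%Z.
Proof.
have := ffz m.+4 4; rewrite !ffactnS ffactn0 /=.
have -> : (m%:Z + 4) * (m%:Z + 3) * (m%:Z + 2) * (m%:Z + 1) = Posz (m.+4 * (m.+3 * (m.+2 * (m.+1 * 1)))) by lia.
by [].
Qed.
Lemma F120 (m : nat) : (120 %| (m%:Z + 4) * (m%:Z + 3) * (m%:Z + 2) * (m%:Z + 1) * m%:Z)%Z.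
Proof.
have := ffz m.+4 5; rewrite !ffactnS ffactn0 /=.
have -> : (m%:Z + 4) * (m%:Z + 3) * (m%:Z + 2) * (m%:Z + 1) * m%:Z = Posz (m.+4 * (m.+3 * (m.+2 * (m.+1 * (m * 1))))) by lia.
by [].
Qed.
Lemma F720 (m : nat) : (720 %| (m%:Z + 5) * (m%:Z + 4) * (m%:Z + 3) * (m%:Z + 2) * (m%:Z + 1) * m%:Z)%Z.
Proof.
have := ffz m.+4.+1 6; rewrite !ffactnS ffactn0 /=.
have -> : (m%:Z + 5) * (m%:Z + 4) * (m%:Z + 3) * (m%:Z + 2) * (m%:Z + 1) * m%:Z = Posz (m.+4.+1 * (m.+4 * (m.+3 * (m.+2 * (m.+1 * (m * 1)))))) by lia.
by [].
Qed.

Lemma D12 (P : int) (m : nat) : P = m%:Z + 2 -> (12 %| P ^+ 2 * (P ^+ 2 - 1))%Z.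
Proof.
move=> ->; have /dvdzP [t1 E1] := F24 m; have /dvdzP [t2 E2] := F6 m.
apply/dvdzP; exists (2 * t1 - t2).
have -> : (m%:Z + 2) ^+ 2 * ((m%:Z + 2) ^+ 2 - 1) =
  (m%:Z + 4) * (m%:Z + 3) * (m%:Z + 2) * (m%:Z + 1) - 2 * ((m%:Z + 3) * (m%:Z + 2) * (m%:Z + 1)) by ring.
by rewrite E1 E2; ring.
Qed.

Lemma D360 (P : int) (m : nat) : P = m%:Z + 2 -> (360 %| P ^+ 2 * (P ^+ 2 - 1) * (P ^+ 2 - 4))%Z.
Proof.
move=> ->; have /dvdzP [t1 E1] := F720 m; have /dvdzP [t2 E2] := F120 m.
apply/dvdzP; exists (2 * t1 - t2).
have -> : (m%:Z + 2) ^+ 2 * ((m%:Z + 2) ^+ 2 - 1) * ((m%:Z + 2) ^+ 2 - 4) =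
  (m%:Z + 5) * (m%:Z + 4) * (m%:Z + 3) * (m%:Z + 2) * (m%:Z + 1) * m%:Z
  - 3 * ((m%:Z + 4) * (m%:Z + 3) * (m%:Z + 2) * (m%:Z + 1) * m%:Z) by ring.
by rewrite E1 E2; ring.
Qed.

Lemma D60 (P : int) (m : nat) : P = m%:Z + 2 -> (60 %| P ^+ 2 * (P ^+ 4 - 1))%Z.
Proof.
move=> HP; have /dvdzP [t1 E1] := D360 HP; have /dvdzP [t2 E2] := D12 HP.
apply/dvdzP; exists (6 * t1 + t2).
have -> : P ^+ 2 * (P ^+ 4 - 1) = P ^+ 2 * (P ^+ 2 - 1) * (P ^+ 2 - 4) + 5 * (P ^+ 2 * (P ^+ 2 - 1)) by ring.
by rewrite E1 E2; ring.
Qed.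
Lemma solve_rat (k : nat) (c e : int) : (k != 0)%N -> k%:R * c = e -> (c%:~R : rat) = e%:~R / k%:R.
Proof.
move=> k0 <-; rewrite intrM rmorph_nat mulrAC mulfV ?mul1r //.
by rewrite pnatr_eq0.
Qed.

Ltac push := rewrite ?(intrD, intrB, intrM, intrN, rmorphXn, rmorph_nat).

Lemma Skd_comm_gen (k d2 A C D1 D2 A' C' D1' D2' : int) :
  12 * C = k * A * (A - 1) -> 60 * D1 = A * (A ^+ 2 - 1) * d2 ->
  360 * D2 = k ^+ 2 * A * (A - 1) * (A - 4) ->
  12 * C' = k * A' * (A' - 1) -> 60 * D1' = A' * (A' ^+ 2 - 1) * d2 ->
  360 * D2' = k ^+ 2 * A' * (A' - 1) * (A' - 4) ->
  comp (A', C', D1' + D2') (A, C, D1 + D2) = comp (A, C, D1 + D2) (A', C', D1' + D2').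
Proof.
move=> H1 H2 H3 H4 H5 H6.
have HC := @solve_rat 12 _ _ isT H1; have HD1 := @solve_rat 60 _ _ isT H2.
have HD2 := @solve_rat 360 _ _ isT H3; have HC' := @solve_rat 12 _ _ isT H4.
have HD1' := @solve_rat 60 _ _ isT H5; have HD2' := @solve_rat 360 _ _ isT H6.
rewrite /comp /=; congr (_, _, _); first ring; apply: (@intr_inj rat); push;
  rewrite ?HC ?HD1 ?HD2 ?HC' ?HD1' ?HD2' //; push; field; by [].
Qed.

Lemma prime_m2 p : prime p -> exists m : nat, p%:Z = m%:Z + 2.
Proof. by move=> /prime_gt1 p1; exists (p - 2)%N; lia. Qed.

Lemma Skd_facts (k : int) (d2 : nat) p : prime p ->
  exists C D1 D2, Skd k d2 p = tp ((p%:Z) ^+ 2, C, D1 + D2) /\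
    12 * C = k * (p%:Z) ^+ 2 * ((p%:Z) ^+ 2 - 1) /\
    60 * D1 = (p%:Z) ^+ 2 * (((p%:Z) ^+ 2) ^+ 2 - 1) * d2%:Z /\
    360 * D2 = k ^+ 2 * (p%:Z) ^+ 2 * ((p%:Z) ^+ 2 - 1) * ((p%:Z) ^+ 2 - 4).
Proof.
move=> pp; have [m Hm] := prime_m2 pp.
set P := p%:Z.
have d12 : (12 %| k * P ^+ 2 * (P ^+ 2 - 1))%Z by rewrite -mulrA; apply: dvdz_mull; exact: D12 Hm.
have d60 : (60 %| P ^+ 2 * (P ^+ 4 - 1) * d2%:Z)%Z by apply: dvdz_mulr; exact: D60 Hm.
have d360 : (360 %| k ^+ 2 * P ^+ 2 * (P ^+ 2 - 1) * (P ^+ 2 - 4))%Z.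
  have -> : k ^+ 2 * P ^+ 2 * (P ^+ 2 - 1) * (P ^+ 2 - 4) = k ^+ 2 * (P ^+ 2 * (P ^+ 2 - 1) * (P ^+ 2 - 4)) by ring.
  by apply: dvdz_mull; exact: D360 Hm.
exists ((k * P ^+ 2 * (P ^+ 2 - 1)) %/ 12)%Z.
have HC : 12 * ((k * P ^+ 2 * (P ^+ 2 - 1)) %/ 12)%Z = k * P ^+ 2 * (P ^+ 2 - 1).
  by rewrite mulrC divzK.
case: (boolP (p == 2%N)) => [/eqP p2|p2].
  exists d2%:Z, 0; rewrite /P p2 in HC *; split.
    by rewrite /Skd /dcoef /tp /mk /= polyC0 add0r addr0.
  split; first exact: HC.
  split; ring.
exists ((P ^+ 2 * (P ^+ 4 - 1) * d2%:Z) %/ 60)%Z, ((k ^+ 2 * P ^+ 2 * (P ^+ 2 - 1) * (P ^+ 2 - 4)) %/ 360)%Z.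
split; first by rewrite /Skd /dcoef /tp /mk (negbTE p2) /= polyC0 add0r.
split; first exact: HC.
split; last by rewrite mulrC divzK.
by rewrite mulrC divzK //; ring.
Qed.

Lemma cop360 p : prime p -> p != 2%N -> p != 3%N -> p != 5%N -> coprimez p%:Z 360.
Proof.
move=> pp n2 n3 n5.
have : coprime p 360.
  rewrite prime_coprime //; apply/negP.
  rewrite (_ : 360 = 2 ^ 3 * (3 ^ 2 * 5))%N // !Euclid_dvdM //.
  by rewrite !dvdn_prime2 // (negbTE n2) (negbTE n3) (negbTE n5).
by [].
Qed.

Lemma gauss360 p (X Y : int) : prime p -> p != 2%N -> p != 3%N -> p != 5%N ->
  360 * X = p%:Z * Y -> (p%:Z %| X)%Z.
Proof.
move=> pp n2 n3 n5 E; rewrite -(Gauss_dvdzr _ (cop360 pp n2 n3 n5)) E.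
exact: dvdz_mulr (dvdzz _).
Qed.

Lemma part2a (k : int) (d2 : nat) : (k = 1 \/ k = 5) -> ~~ odd d2 -> is_flstruct (Skd k d2).
Proof.
move=> Hk Hd.
have [t Ht] : exists t : int, d2%:Z = 2 * t.
  exists (d2./2)%:Z; have := odd_double_half d2; rewrite (negbTE Hd) add0n => E.
  by rewrite -{1}E -muln2; lia.
split; [|split].
- move=> p pp; have [C [D1 [D2 [-> _]]]] := Skd_facts k d2 pp.
  by rewrite /is_elt size_mk coef_mk.
- move=> p q pp pq.
  have [C [D1 [D2 [-> [h1 [h2 h3]]]]]] := Skd_facts k d2 pp.
  have [C' [D1' [D2' [-> [h1' [h2' h3']]]]]] := Skd_facts k d2 pq.
  by rewrite !ev_tp; congr tp; apply: Skd_comm_gen h1 h2 h3 h1' h2' h3'.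
move=> p pp i; have [C [D1 [D2 [E [h1 [h2 h3]]]]]] := Skd_facts k d2 pp.
rewrite coef_cong E /tp coef_mk.
have p0 : (0 == p) = false by case: p pp {E h1 h2 h3}.
have p1 : (1 == p) = false by case: p pp {E h1 h2 h3 p0} => [|[]].
case: i => [|[|[|[|i]]]] //=; rewrite ?p0 ?p1 ?subr0 ?dvdz0 //.
- by rewrite expr2; apply: dvdz_mulr (dvdzz _).
- have [Ep | n2] := eqVneq p 2%N; [subst p|].
    have : 12 * C = 12 * k by rewrite h1; ring.
    by move=> HC /=; case: Hk => Ek; lia.
  rewrite subr0.
  have [Ep | n3] := eqVneq p 3%N; [subst p|].
    have : 12 * C = 72 * k by rewrite h1; ring.
    by move=> HC; lia.
  have [Ep | n5] := eqVneq p 5%N; [subst p|].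
    have : 12 * C = 600 * k by rewrite h1; ring.
    by move=> HC; lia.
  apply: (gauss360 (Y := 30 * k * p%:Z * (p%:Z ^+ 2 - 1))) => //.
  have -> : 360 * C = 30 * (12 * C) by ring.
  by rewrite h1; ring.
- have [Ep | n2] := eqVneq p 2%N; [subst p|].
    have : 60 * D1 = 60 * d2%:Z by rewrite h2; ring.
    have : 360 * D2 = 0 by rewrite h3; ring.
    by move=> HD2 HD1 /=; rewrite subr0; lia.
  have [Ep | n3] := eqVneq p 3%N; [subst p|].
    have : 60 * D1 = 720 * d2%:Z by rewrite h2; ring.
    have : 360 * D2 = 360 * k ^+ 2 by rewrite h3; ring.
    by case: Hk => -> /= HD2 HD1; lia.
  rewrite subr0.
  have [Ep | n5] := eqVneq p 5%N; [subst p|].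
    have : 60 * D1 = 15600 * d2%:Z by rewrite h2; ring.
    have : 360 * D2 = 12600 * k ^+ 2 by rewrite h3; ring.
    by case: Hk => -> /= HD2 HD1; lia.
  apply: (gauss360 (Y := 6 * p%:Z * (p%:Z ^+ 4 - 1) * d2%:Z
                          + k ^+ 2 * p%:Z * (p%:Z ^+ 2 - 1) * (p%:Z ^+ 2 - 4))) => //.
  have -> : 360 * (D1 + D2) = 6 * (60 * D1) + 360 * D2 by ring.
  by rewrite h2 h3; ring.
Qed.

Lemma coef_X1n (p i : nat) : (('X + 1) ^+ p : {poly int})`_i = ('C(p, i))%:R.
Proof.
rewrite exprD1n coef_sum.
have -> : \sum_(j < p.+1) ('X^j *+ 'C(p, j) : {poly int})`_i =
          \sum_(j < p.+1) ((i == j)%:R *+ 'C(p, j) : int).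
  by apply: eq_bigr => j _; rewrite coefMn coefXn.
case: (ltnP i p.+1) => Hi.
  rewrite (bigD1 (Ordinal Hi)) //= eqxx mulr1n big1 ?addr0 // => j Hj.
  have /negbTE -> : i != j.
    by apply: contraNneq Hj => E; apply/eqP/val_inj; rewrite /= E.
  by rewrite mul0rn.
rewrite bin_small // big1 // => j _.
by rewrite gtn_eqF ?mul0rn // (leq_trans (ltn_ord j) Hi).
Qed.

Lemma S1_tp p : S1 p = tp (p%:Z, ('C(p, 2))%:Z, ('C(p, 3))%:Z).
Proof.
apply/polyP => i; rewrite /S1 /trunc4 coef_take_poly /tp coef_mk coefB coef_X1n coefC.
by case: i => [|[|[|[|i]]]] //=; rewrite ?subr0 ?bin0 ?bin1 ?natz.
Qed.

Lemma S1_comm_gen (P C2 C3 Q D2 D3 : int) :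
  2 * C2 = P * (P - 1) -> 6 * C3 = P * (P - 1) * (P - 2) ->
  2 * D2 = Q * (Q - 1) -> 6 * D3 = Q * (Q - 1) * (Q - 2) ->
  comp (Q, D2, D3) (P, C2, C3) = comp (P, C2, C3) (Q, D2, D3).
Proof.
move=> H1 H2 H3 H4.
have HC := @solve_rat 2 _ _ isT H1; have HD := @solve_rat 6 _ _ isT H2.
have HC' := @solve_rat 2 _ _ isT H3; have HD' := @solve_rat 6 _ _ isT H4.
rewrite /comp /=; congr (_, _, _); first ring; apply: (@intr_inj rat); push;
  rewrite ?HC ?HD ?HC' ?HD' //; push; field; by [].
Qed.

Lemma S1_facts p : prime p ->
  2 * ('C(p, 2))%:Z = p%:Z * (p%:Z - 1) /\ 6 * ('C(p, 3))%:Z = p%:Z * (p%:Z - 1) * (p%:Z - 2).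
Proof.
move=> /prime_gt1; case: p => [|[|m]] // _.
have := bin_ffact m.+2 2; have := bin_ffact m.+2 3; rewrite !ffactnS !ffactn0 /=.
rewrite (_ : 3`! = 6)%N // (_ : 2`! = 2)%N //.
by move=> E3 E2; split; lia.
Qed.

Lemma S1_fl : is_flstruct S1.
Proof.
split; [|split].
- by move=> p _; rewrite S1_tp /is_elt size_mk coef_mk.
- move=> p q pp pq; rewrite !S1_tp !ev_tp; congr tp.
  have [h1 h2] := S1_facts pp; have [h3 h4] := S1_facts pq.
  exact: S1_comm_gen h1 h2 h3 h4.
move=> p pp i; rewrite coef_cong S1_tp /tp coef_mk.
have p0 : (0 == p) = false by case: p pp.
have p1 : (1 == p) = false by case: p pp p0 => [|[]].
case: i => [|[|[|[|i]]]] //=; rewrite ?p0 ?p1 ?subr0 ?dvdz0 ?dvdzz //.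
- have [Ep | n2] := eqVneq p 2%N; first by subst p.
  rewrite subr0 dvdzE !absz_nat prime_dvd_bin //.
  by have := prime_gt1 pp; lia.
- have [Ep | n3] := eqVneq p 3%N; first by subst p.
  rewrite subr0.
  have [Ep | n2] := eqVneq p 2%N; first by subst p.
  rewrite dvdzE !absz_nat prime_dvd_bin //.
  by have := prime_gt1 pp; lia.
Qed.

Lemma conj_fliso d R S (f g : trip) : is_flstruct R -> is_flstruct S ->
  (forall p, prime p -> (R p)`_1 = (S p)`_1) -> comp f g = tid -> comp g f = tid ->
  comp (tr R 2) f = comp f (tr S 2) ->
  (S 2%N)`_1 - (S 2%N)`_1 ^+ 2 != 0 -> (S 2%N)`_1 - (S 2%N)`_1 ^+ 3 != 0 -> fliso d R S.
Proof.
move=> HR HS H1 Hfg Hgf Hc n2 n3.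
apply: (fliso_of d (r := tr R) (s := tr S) (f := f) (g := g)) => //.
- by move=> p pp; apply: fl_tp.
- by move=> p pp; apply: fl_tp.
move=> p pp; apply: (conj_step (g := g) (fl_comm HR (isT : prime 2) pp) (fl_comm HS (isT : prime 2) pp)) => //.
by rewrite /tr /= H1.
Qed.

Lemma part1 d R : is_flstruct R -> (forall p, prime p -> (R p)`_1 = p%:Z) -> fliso d R S1.
Proof.
move=> HR Hb.
have p2 : prime 2 by []. have p3 : prime 3 by [].
set c := (R 2%N)`_2; set e := (R 2%N)`_3.
have [c3 [d3 E3]] : exists c3 d3, tr R 3 = (3, c3, d3) by exists (R 3%N)`_2, (R 3%N)`_3; rewrite /tr Hb.
have E2 : tr R 2 = (2, c, e) by rewrite /tr Hb.
have [h1 h2] := comm_eqs (fl_comm HR p2 p3); rewrite E2 E3 /= in h1 h2.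
have /dvdzP [u Hu] := fl_cong HR p2 (isT : (2 < 4)%N); rewrite -/c /= in Hu.
have /dvdzP [v Hv] := fl_cong HR p2 (isT : (3 < 4)%N); rewrite -/e /= subr0 in Hv.
have /dvdzP [w Hw] := fl_cong HR p3 (isT : (3 < 4)%N).
have d3E : d3 = (R 3%N)`_3 by move: E3; rewrite /tr => -[].
rewrite -d3E /= in Hw.
have c3E : c3 = 3 * c by lia.
rewrite c3E in h2.
have d3E' : d3 = 4 * e + c ^+ 2.
  have h2' : 6 * d3 = 24 * e + 6 * c ^+ 2 by apply: (eq_via (esym h2)); ring.
  move: h2'; set C2 := c ^+ 2; lia.
have Hc : c = 1 + 2 * u by lia.
have [s Hs] : exists s, w = 2 * s.
  exists (w %/ 2)%Z; move: Hw; rewrite d3E' Hc Hv; set U := u ^+ 2.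
  have -> : 4 * (v * 2) + (1 + 2 * u) ^+ 2 - 1 = 8 * v + 4 * U + 4 * u by rewrite /U; ring.
  lia.
pose f : trip := (1, u, s - v - u).
pose g : trip := (1, - u, 2 * u ^+ 2 - (s - v - u)).
apply: (conj_fliso d (f := f) (g := g) HR S1_fl).
- by move=> p pp; rewrite Hb // S1_tp /tp coef_mk.
- by rewrite /comp /tid /=; congr (_, _, _); ring.
- by rewrite /comp /tid /=; congr (_, _, _); ring.
- rewrite E2 /tr S1_tp /tp !coef_mk /= /comp /=; congr (_, _, _).
  + rewrite binn Hc; ring.
  + move: Hw; rewrite binn bin_small // d3E' Hc Hv Hs => Hw.
    apply: (eq_via Hw); ring.
- by rewrite S1_tp /tp coef_mk.
- by rewrite S1_tp /tp coef_mk.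
Qed.

Lemma Skd2 (k : int) (d2 : nat) : tr (Skd k d2) 2 = (4, k, d2%:Z).
Proof.
have [C [D1 [D2 [E [h1 [h2 h3]]]]]] := Skd_facts k d2 (isT : prime 2).
rewrite /tr E /tp !coef_mk /=.
have : 12 * C = 12 * k by rewrite h1; ring.
have : 60 * D1 = 60 * d2%:Z by rewrite h2; ring.
have : 360 * D2 = 0 by rewrite h3; ring.
move=> e3 e2 e1; congr (_, _, _); lia.
Qed.

Lemma Skd_b (k : int) (d2 : nat) p : prime p -> (Skd k d2 p)`_1 = p%:Z ^+ 2.
Proof.
by move=> pp; have [C [D1 [D2 [E _]]]] := Skd_facts k d2 pp; rewrite E /tp coef_mk.
Qed.

Lemma part2b d (k k' : int) (d2 d2' : nat) :
  (k = 1 \/ k = 5) -> (d2 < 60)%N -> ~~ odd d2 ->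
  (k' = 1 \/ k' = 5) -> (d2' < 60)%N -> ~~ odd d2' ->
  fliso d (Skd k d2) (Skd k' d2') -> k = k' /\ d2 = d2'.
Proof.
move=> Hk Hd Hod Hk' Hd' Hod' H.
have HS := part2a Hk Hod; have HS' := part2a Hk' Hod'.
have [[[f1 f2] f3] [g [Hfg Hgf Hc]]] := fliso_tp (r := tr (Skd k d2)) (s := tr (Skd k' d2'))
   (fun p pp => fl_tp HS pp) (fun p pp => fl_tp HS' pp) H.
have := Hc 2%N isT; rewrite !Skd2 => Hc2.
have E2 := congr1 (fun t : trip => t.1.2) Hc2.
have E3 := congr1 (fun t : trip => t.2) Hc2.
rewrite /comp /= in E2 E3.
have /= [E1|E1] := inv_unit Hgf; rewrite E1 in E2 E3.
- have f20 : f2 = 0 by case: Hk => Ek; case: Hk' => Ek'; lia.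
  rewrite f20 in E2 E3.
  have kk : k = k' by lia.
  split => //; lia.
- exfalso; case: Hk => Ek; case: Hk' => Ek'; lia.
Qed.

Lemma part2c d R : is_flstruct R -> (forall p, prime p -> (R p)`_1 = p%:Z ^+ 2) ->
  exists (k : int) (d2 : nat), (k = 1 \/ k = 5) /\ (d2 < 60)%N /\ ~~ odd d2 /\
        fliso d R (Skd k d2).
Proof.
move=> HR Hb.
have p2 : prime 2 by []. have p3 : prime 3 by [].
set c := (R 2%N)`_2; set e := (R 2%N)`_3.
have [c3 [d3 E3]] : exists c3 d3, tr R 3 = (9, c3, d3) by exists (R 3%N)`_2, (R 3%N)`_3; rewrite /tr Hb.
have E2 : tr R 2 = (4, c, e) by rewrite /tr Hb.
have [h1 h2] := comm_eqs (fl_comm HR p2 p3); rewrite E2 E3 /= in h1 h2.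
have /dvdzP [u Hu] := fl_cong HR p2 (isT : (2 < 4)%N); rewrite -/c /= in Hu.
have /dvdzP [v Hv] := fl_cong HR p2 (isT : (3 < 4)%N); rewrite -/e /= subr0 in Hv.
have /dvdzP [w Hw] := fl_cong HR p3 (isT : (3 < 4)%N).
have d3E : d3 = (R 3%N)`_3 by move: E3; rewrite /tr => -[].
rewrite -d3E /= in Hw.
have c3E : c3 = 6 * c by lia.
rewrite c3E in h2.
have d3E' : d3 = 12 * e + c ^+ 2.
  have h2' : 60 * d3 = 720 * e + 60 * c ^+ 2 by apply: (eq_via (esym h2)); ring.
  move: h2'; set C2 := c ^+ 2; lia.
have n3 : ~ (3 %| c)%Z.
  move/dvdzP => [z Hz]; move: Hw; rewrite d3E' Hz.
  have -> : (z * 3) ^+ 2 = 9 * z ^+ 2 by ring.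
  set Z := z ^+ 2; lia.
suff key : forall eps k beta : int, (eps = 1 \/ eps = -1) -> (k = 1 \/ k = 5) ->
    c = eps * k + 12 * beta ->
    exists (k : int) (d2 : nat), (k = 1 \/ k = 5) /\ (d2 < 60)%N /\ ~~ odd d2 /\
        fliso d R (Skd k d2).
  have [q [r [Ec Hr]]] : exists q r, c = q * 12 + r /\ 0 <= r < 12.
    by exists (c %/ 12)%Z, (c %% 12)%Z; lia.
  have : r = 1 \/ r = 5 \/ r = 7 \/ r = 11 by lia.
  case=> [Er|[Er|[Er|Er]]].
  - by apply: (key 1 1 q); [left|left|lia].
  - by apply: (key 1 5 q); [left|right|lia].
  - by apply: (key (-1) 5 (q + 1)); [right|right|lia].
  - by apply: (key (-1) 1 (q + 1)); [right|left|lia].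
move=> eps k beta Heps Hk Hc.
set X := 2 * c * beta + e - 8 * eps * beta * k.
have [q' [r' [EX Hr']]] : exists q r, X = q * 60 + r /\ 0 <= r < 60.
  by exists (X %/ 60)%Z, (X %% 60)%Z; lia.
have Xev : exists t, r' = 2 * t.
  exists (r' %/ 2)%Z; move: EX; rewrite /X Hv.
  set P1 := c * beta; set P2 := eps * beta * k.
  have -> : 2 * c * beta + v * 2 - 8 * eps * beta * k = 2 * P1 + 2 * v - 8 * P2 by rewrite /P1 /P2; ring.
  lia.
have Hodd : ~~ odd `|r'|%N.
  case: Xev => t Ht; apply/negP => Hodd.
  have : (`|r'|%N = (`|t|%N).*2)%N by lia.
  by move=> E; move: Hodd; rewrite E odd_double.
exists k, `|r'|%N; split => //; split; first lia.
split => //.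
have Er : (`|r'|%N)%:Z = r' by lia.
pose f : trip := (eps, beta, eps * q').
pose g : trip := (eps, - eps * beta, 2 * eps * beta ^+ 2 - eps * q').
apply: (conj_fliso d (f := f) (g := g) HR (part2a Hk Hodd)).
- by move=> p pp; rewrite Hb // Skd_b.
- by rewrite /comp /tid /=; case: Heps => ->; congr (_, _, _); ring.
- by rewrite /comp /tid /=; case: Heps => ->; congr (_, _, _); ring.
- rewrite E2 Skd2 Er /comp /=; congr (_, _, _).
  + ring.
  + by rewrite Hc; case: Heps => ->; ring.
  + move: EX; rewrite /X => EX.
    by case: Heps => Ee; rewrite Hc Ee in EX *; [apply: (eq_via EX) | apply: (eq_via (esym EX))]; ring.
- by rewrite Skd_b.
- by rewrite Skd_b.
Qed.

Theorem theorem1p6 (d : nat) (R : nat -> {poly int}) :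
  (1 <= d)%N -> is_flstruct R ->
  (* (1) *)
  ((forall p, prime p -> (R p)`_1 = p%:Z) ->
     is_flstruct S1 /\ fliso d R S1) /\
  (* (2) *)
  ((forall p, prime p -> (R p)`_1 = p%:Z ^+ 2) ->
     (forall (k : int) (d2 : nat), (k = 1 \/ k = 5) -> (d2 < 60)%N -> ~~ odd d2 ->
        is_flstruct (Skd k d2)) /\
     (forall (k k' : int) (d2 d2' : nat),
        (k = 1 \/ k = 5) -> (d2 < 60)%N -> ~~ odd d2 ->
        (k' = 1 \/ k' = 5) -> (d2' < 60)%N -> ~~ odd d2' ->
        fliso d (Skd k d2) (Skd k' d2') -> k = k' /\ d2 = d2') /\
     (exists (k : int) (d2 : nat), (k = 1 \/ k = 5) /\ (d2 < 60)%N /\ ~~ odd d2 /\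
        fliso d R (Skd k d2))) /\
  (* (3) *)
  (forall b : nat -> int, (forall p, prime p -> b p != 0) ->
     (forall p, prime p -> (R p)`_1 = b p) ->
     exists L : seq (nat -> {poly int}),
       forall S, is_flstruct S -> (forall p, prime p -> (S p)`_1 = b p) ->
         exists i, (i < size L)%N /\ fliso d S (nth S1 L i)) /\
  (* (4) *)
  (((R 2%N)`_1 = 0 ->
      exists c e : nat -> int, forall p, prime p -> R p = Scd c e p) /\
   (forall c e : nat -> int,
      (forall p, prime p -> forall i, (p%:Z %| (trunc4 (Scd c e p - 'X^p))`_i)%Z) ->
      is_flstruct (Scd c e)) /\
   (forall c e cb eb : nat -> int,
      is_flstruct (Scd c e) -> is_flstruct (Scd cb eb) ->
      (fliso d (Scd c e) (Scd cb eb) <->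
        ((forall p, prime p -> cb p = c p) \/ (forall p, prime p -> cb p = - c p)) /\
        (exists alpha : int, forall p, prime p -> eb p = e p + 2 * c p * alpha)))).
Proof.
move=> d1 HR; split; [|split; [|split]].
- by move=> Hb; split; [exact: S1_fl | exact: part1].
- move=> Hb; split; first by move=> k d2 Hk _ Hod; exact: part2a.
  split; first exact: part2b.
  exact: part2c.
- by move=> b Hb0 _; exact: part3.
split; first exact: part4a HR.
split; first exact: part4b.
by move=> c e cb eb _ _; exact: part4c.
Qed.
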